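(* Let $k \geq 1$. If there is a (deterministic, or randomized with error at most $1/3$) communication protocol $Q$ for $\operatorname{SSD}_{2k,k+1}$ under the natural partition (Alice holds $x \in \{0,1\}^{2k}$, Bob holds $y \in \{0,1\}^{k+1}$), then there is a communication protocol of the same kind for $\operatorname{IND}_k$ under the natural partition (Alice holds $x \in \{0,1\}^k$, Bob holds $i \in [k]$) whose cost is identical to that of $Q$.
   Context: $\operatorname{SSD}_{n,k} : \{0,1\}^n \times \{0,1\}^k \to \{0,1\}$ is $1$ iff $y$ is a subsequence of $x$ (there exist indices $i_1 < \dots < i_k$ with $x_{i_j} = y_j$). $\operatorname{IND}_k : \{0,1\}^k \times [k] \to \{0,1\}$ is the indexing function $\operatorname{IND}_k(x,i) = x_i$. The cost of a protocol is the maximum number of bits exchanged over all inputs. *)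

(* Defs.v *)
From mathcomp Require Import all_boot.
Set Implicit Arguments. Unset Strict Implicit. Unset Printing Implicit Defensive.

Definition bitvec (n : nat) := n.-tuple bool.

Definition SSD (n k : nat) (x : bitvec n) (y : bitvec k) : bool :=
  [exists f : {ffun 'I_k -> 'I_n},
     [forall i : 'I_k, forall j : 'I_k, (i < j) ==> (f i < f j)] &&
     [forall j : 'I_k, tnth x (f j) == tnth y j]].

Definition IND (k : nat) (x : bitvec k) (i : 'I_k) : bool := tnth x i.

(* Deterministic two-party protocol trees: Alice holds a : A, Bob holds b : B.
   At an Alice node, Alice sends the bit f a (0 -> left, 1 -> right);
   similarly for Bob. Leaves carry the output. *)
Inductive proto (A B : Type) : Type :=
| PLeaf of bool
| PAlice of (A -> bool) & proto A B & proto A B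
| PBob of (B -> bool) & proto A B & proto A B.
Arguments PLeaf {A B}.

Fixpoint peval (A B : Type) (p : proto A B) (a : A) (b : B) : bool :=
  match p with
  | PLeaf v => v
  | PAlice f l r => if f a then peval r a b else peval l a b
  | PBob g l r => if g b then peval r a b else peval l a b
  end.

Fixpoint pbits (A B : Type) (p : proto A B) (a : A) (b : B) : nat :=
  match p with
  | PLeaf _ => 0
  | PAlice f l r => (if f a then pbits r a b else pbits l a b).+1
  | PBob g l r => (if g b then pbits r a b else pbits l a b).+1
  end.

Definition pcost (A B : finType) (p : proto A B) : nat :=
  \max_(a : A) \max_(b : B) pbits p a b.

Definition det_computes (A B : finType) (p : proto A B) (F : A -> B -> bool) :=
  forall a b, peval p a b = F a b.

(* Public-coin randomized protocol: a family of deterministic protocols indexed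
   by a uniformly random shared string r in {0,1}^m. *)
Definition pub_proto (A B : Type) (m : nat) := m.-tuple bool -> proto A B.

Definition pub_computes (A B : finType) (m : nat) (P : pub_proto A B m)
  (F : A -> B -> bool) :=
  forall a b, 3 * #|[pred r : m.-tuple bool | peval (P r) a b != F a b]| <= 2 ^ m.

Definition pub_cost (A B : finType) (m : nat) (P : pub_proto A B m) : nat :=
  \max_(r : m.-tuple bool) pcost (P r).

(* Private-coin randomized protocol: Alice has a private uniformly random
   string in {0,1}^ma, Bob one in {0,1}^mb (independent). *)
Definition priv_proto (A B : Type) (ma mb : nat) :=
  proto (A * ma.-tuple bool) (B * mb.-tuple bool).

Definition priv_computes (A B : finType) (ma mb : nat) (P : priv_proto A B ma mb)
  (F : A -> B -> bool) :=
  forall a b, 3 * #|[pred r : ma.-tuple bool * mb.-tuple bool |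
                      peval P (a, r.1) (b, r.2) != F a b]| <= 2 ^ (ma + mb).

Definition priv_cost (A B : finType) (ma mb : nat) (P : priv_proto A B ma mb) : nat :=
  pcost P.

(* Main.v *)
Require Import Defs.
From mathcomp Require Import all_boot.
From mathcomp Require Import zify.
Set Implicit Arguments. Unset Strict Implicit.

Fixpoint pmap (A B A' B' : Type) (fa : A -> A') (fb : B -> B') (p : proto A' B') : proto A B :=
  match p with
  | PLeaf v => PLeaf v
  | PAlice f l r => PAlice (fun a => f (fa a)) (pmap fa fb l) (pmap fa fb r)
  | PBob g l r => PBob (fun b => g (fb b)) (pmap fa fb l) (pmap fa fb r)
  end.

Lemma peval_pmap A B A' B' (fa : A -> A') (fb : B -> B') p a b :
  peval (pmap fa fb p) a b = peval p (fa a) (fb b).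
Proof. by elim: p => [v|f l IHl r IHr|g l IHl r IHr] //=; rewrite IHl IHr. Qed.

Lemma pbits_pmap A B A' B' (fa : A -> A') (fb : B -> B') p a b :
  pbits (pmap fa fb p) a b = pbits p (fa a) (fb b).
Proof. by elim: p => [v|f l IHl r IHr|g l IHl r IHr] //=; rewrite IHl IHr. Qed.

Fixpoint pad (A B : Type) (n : nat) (p : proto A B) : proto A B :=
  match n with
  | 0 => p
  | n'.+1 => PAlice (fun _ => false) (pad n' p) (pad n' p)
  end.

Lemma peval_pad A B n (p : proto A B) a b : peval (pad n p) a b = peval p a b.
Proof. by elim: n => //= n ->. Qed.

Lemma pbits_pad A B n (p : proto A B) a b : pbits (pad n p) a b = n + pbits p a b.
Proof. by elim: n => //= n ->. Qed.

Lemma pcost_le (A B : finType) (p : proto A B) c :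
  (forall a b, pbits p a b <= c) -> pcost p <= c.
Proof. by move=> H; apply/bigmax_leqP => a _; apply/bigmax_leqP => b _. Qed.

Lemma pbits_le (A B : finType) (p : proto A B) a b : pbits p a b <= pcost p.
Proof.
rewrite /pcost.
have h1 := @leq_bigmax A (fun a => \max_b pbits p a b) a.
have h2 := @leq_bigmax B (fun b => pbits p a b) b.
exact: leq_trans h2 h1.
Qed.

Lemma pcost_pad (A B : finType) (a0 : A) (b0 : B) n (p : proto A B) :
  pcost (pad n p) = n + pcost p.
Proof.
apply/eqP; rewrite eqn_leq; apply/andP; split.
  by apply: pcost_le => a b; rewrite pbits_pad leq_add2l pbits_le.
have hA : 0 < #|A| by apply/card_gt0P; exists a0.
have hB : 0 < #|B| by apply/card_gt0P; exists b0.
case: (eq_bigmax (fun a => \max_b pbits p a b) hA) => a Ha.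
case: (eq_bigmax (fun b => pbits p a b) hB) => b Hb.
rewrite /pcost Ha Hb -pbits_pad.
exact: (pbits_le (pad n p) a b).
Qed.

Lemma pcost_exact (A B : finType) (a0 : A) (b0 : B) (p : proto A B) c :
  pcost p <= c -> pcost (pad (c - pcost p) p) = c.
Proof. by move=> H; rewrite (pcost_pad a0 b0) subnK. Qed.

Lemma max_const (T : finType) (t0 : T) (F : T -> nat) c :
  (forall t, F t = c) -> \max_t F t = c.
Proof.
move=> H; apply/eqP; rewrite eqn_leq; apply/andP; split.
  by apply/bigmax_leqP => t _; rewrite H.
by rewrite -(H t0) (@leq_bigmax T F t0).
Qed.

Section Red.
Variables (k : nat) (x : bitvec k) (i : 'I_k).
Let b t := nth false x t.
Definition xv (p : nat) : bool := if odd p then ~~ b p./2 else b p./2.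

Lemma xv2 m (c : bool) : xv (c + m.*2) = if c then ~~ b m else b m.
Proof. by rewrite /xv oddD odd_double addbF half_bit_double; case: c. Qed.

Lemma xv_half p q : p < q -> xv p = xv q -> p./2 < q./2.
Proof.
move=> pq e.
have hp := odd_double_half p; have hq := odd_double_half q.
move: e; rewrite /xv.
case Op: (odd p); case Oq: (odd q) => /=; rewrite Op Oq in hp hq; try lia.
all: move=> e; have: p./2 <> q./2 by move=> E; move: e; rewrite E; case: (b q./2).
all: lia.
Qed.
End Red.

Definition encx k (x : bitvec k) : bitvec (2 * k) := [tuple xv x j | j < 2 * k].
Definition ency k (i : 'I_k) : bitvec k.+1 := [tuple (j <= i) | j < k.+1].

Lemma red k (x : bitvec k) (i : 'I_k) : SSD (encx x) (ency i) = IND x i.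
Proof.
have ik := ltn_ord i.
rewrite /IND (tnth_nth false).
set b := fun t => nth false x t.
have xvE m (c : bool) : xv x (c + m.*2) = if c then ~~ b m else b m by exact: xv2.
apply/existsP/idP.
- case=> f /andP [/forallP mono /forallP eqv].
  pose g t := val (f (inord t)).
  have gmono t t' : t < t' -> t' <= k -> g t < g t'.
    move=> tt' t'k; move: (mono (inord t)) => /forallP /(_ (inord t')) /implyP.
    rewrite !inordK; try lia. by apply.
  have gval t : t <= k -> xv x (g t) = (t <= i).
    move=> tk; move: (eqv (inord t)); rewrite !tnth_mktuple inordK; last lia.
    by move/eqP.
  have gbnd t : g t < 2 * k by exact: ltn_ord.
  have lower t : t <= i -> t <= (g t)./2.
    elim: t => [|t IH] ti //.
    have := xv_half (x:=x) (gmono t t.+1 (ltnSn t) ltac:(lia)).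
    rewrite (gval t) ?(gval t.+1) ?ti ?(ltnW ti); [|lia|lia]. move=> /(_ erefl).
    move: (IH (ltnW ti)); lia.
  have upper d : i.+1 <= k - d -> (g (k - d))./2 + d.+1 <= k.
    elim: d => [|d IH] hd.
      have := odd_double_half (g (k - 0)); have := gbnd (k - 0); lia.
    have E : (k - d.+1).+1 = k - d by lia.
    have := xv_half (x:=x) (gmono (k - d.+1) (k - d) ltac:(lia) ltac:(lia)).
    rewrite !gval; try lia.
  have h1 := lower i (leqnn i).
  have h2 := upper (k - i.+1) ltac:(lia).
  have E1 : k - (k - i.+1) = i.+1 by lia.
  rewrite E1 in h2.
  have h3 := gmono i i.+1 (ltnSn i) ik.
  have hp := odd_double_half (g i); have hq := odd_double_half (g i.+1).
  have E : g i = false + i.*2 by lia.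
  have := gval i (ltnW ik); rewrite E xvE leqnn /=. done.
- move=> bi.
  pose h t := if t < i then ~~ b t + t.*2 else if t == i then i.*2
              else if t == i.+1 then (i.*2).+1 else b t.-1 + (t.-1).*2.
  have hlt (t : 'I_k.+1) : h t < 2 * k.
    have := ltn_ord t; rewrite /h; do ! case: ifP; lia.
  exists [ffun t => Ordinal (hlt t)]; apply/andP; split; apply/forallP => t.
    apply/forallP => t'; apply/implyP => tt'; rewrite !ffunE /=.
    have := ltn_ord t'; have := ltn_ord t.
    rewrite /h; do ! case: ifP; lia.
  rewrite ffunE !tnth_mktuple /=; apply/eqP.
  rewrite /h; case: ifP => H1.
    by rewrite xvE; case: (b t) => //=; lia.
  case: ifP => H2.
    by rewrite -[i.*2]/(false + i.*2) xvE /=; move/eqP: H2 => ->; rewrite leqnn.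
  case: ifP => H3.
    by rewrite -[(i.*2).+1]/(true + i.*2) xvE /= /b bi; move/eqP: H3 => ->; rewrite ltnn.
  rewrite xvE; case: (b t.-1) => /=; lia.
Qed.

Theorem mainTheorem6 (k : nat) (hk : 1 <= k) :
  (* deterministic *)
  (forall Q : proto (bitvec (2 * k)) (bitvec k.+1),
     det_computes Q (@SSD (2 * k) k.+1) ->
     exists P : proto (bitvec k) 'I_k,
       det_computes P (@IND k) /\ pcost P = pcost Q) /\
  (* public-coin randomized, error at most 1/3 *)
  (forall (m : nat) (Q : pub_proto (bitvec (2 * k)) (bitvec k.+1) m),
     pub_computes Q (@SSD (2 * k) k.+1) ->
     exists (m' : nat) (P : pub_proto (bitvec k) 'I_k m'),
       pub_computes P (@IND k) /\ pub_cost P = pub_cost Q) /\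
  (* private-coin randomized, error at most 1/3 *)
  (forall (ma mb : nat) (Q : priv_proto (bitvec (2 * k)) (bitvec k.+1) ma mb),
     priv_computes Q (@SSD (2 * k) k.+1) ->
     exists (ma' mb' : nat) (P : priv_proto (bitvec k) 'I_k ma' mb'),
       priv_computes P (@IND k) /\ priv_cost P = priv_cost Q).
Proof.
pose fa := @encx k; pose fb := @ency k.
pose a0 : bitvec k := [tuple false | _ < k].
pose b0 : 'I_k := Ordinal hk.
split; [|split].
- move=> Q HQ; pose R := pmap fa fb Q.
  exists (pad (pcost Q - pcost R) R); split.
    by move=> a b; rewrite peval_pad peval_pmap HQ red.
  apply: (pcost_exact a0 b0); apply: pcost_le => a b; rewrite pbits_pmap.
  exact: pbits_le.
- move=> m Q HQ; exists m.
  pose R r := pmap fa fb (Q r).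
  exists (fun r => pad (pub_cost Q - pcost (R r)) (R r)); split.
    move=> a b; have := HQ (fa a) (fb b); apply: leq_trans; apply/eq_leq.
    congr (3 * _); apply: eq_card => r; rewrite !inE /=.
    by rewrite peval_pad peval_pmap red.
  pose r0 : m.-tuple bool := [tuple false | _ < m].
  apply: (max_const r0) => r.
  apply: (pcost_exact a0 b0); apply: pcost_le => a b; rewrite pbits_pmap.
  apply: leq_trans (pbits_le _ _ _) _.
  exact: (@leq_bigmax _ (fun r => pcost (Q r)) r).
- move=> ma mb Q HQ; exists ma, mb.
  pose R := pmap (fun ar : bitvec k * ma.-tuple bool => (fa ar.1, ar.2))
                 (fun br : 'I_k * mb.-tuple bool => (fb br.1, br.2)) Q.
  exists (pad (pcost Q - pcost R) R); split.
    move=> a b; have := HQ (fa a) (fb b); apply: leq_trans; apply/eq_leq.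
    congr (3 * _); apply: eq_card => r; rewrite !inE /=.
    by rewrite peval_pad peval_pmap red.
  rewrite /priv_cost.
  apply: (pcost_exact (a0, [tuple false | _ < ma]) (b0, [tuple false | _ < mb])).
  apply: pcost_le => a b; rewrite pbits_pmap.
  exact: pbits_le.
Qed.
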